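(* Let $S_A = A_{II} - A_{IL}A_{LL}^{-1}A_{LI}$ and $S_M = M_{II} - A_{IL}A_{LL}^{-1}A_{LI}$. Then $M^{-1}A$ has (at least) $N_L$ eigenvalues equal to 1, with eigenvectors $\vec{e}^{(k)}$ for $1\leq k \leq N_L$. The other $N_I$ eigenvalues are the eigenvalues of $S_M^{-1}S_A$.
   Context: Let $A$ be an $N\times N$ matrix (in the paper, the upwind finite-difference discretization matrix of $-\varepsilon u'' - c(x)u' + r(x)u = f$ on $(0,1)$ with homogeneous Dirichlet conditions, on a mesh $0=x_0<\dots<x_N=1$). Partition the unknowns into a layer set $L$ (the first $N_L$ indices, meshpoints where meshwidths are $\mathcal{O}(\varepsilon/N)$, including the transition point) and an interior set $I$ (the remaining $N_I$ indices, meshwidths $\mathcal{O}(1/N)$), with $N = N_L + N_I$, so that $A = \begin{bmatrix} A_{LL} & A_{LI} \\ A_{IL} & A_{II}\end{bmatrix}$. Let $M_{II}$ be the upper triangular part (including the diagonal) of $A_{II}$, and define the preconditioner $M = \begin{bmatrix} A_{LL} & A_{LI} \\ A_{IL} & M_{II}\end{bmatrix}$. $\vec{e}^{(k)}$ denotes the $k$-th canonical unit vector of length $N$. The relevant matrices ($A_{LL}$, $S_A$, $S_M$) are assumed invertible. *)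

(* Defs.v *)
From HB Require Import structures.
From mathcomp Require Import all_boot all_order all_algebra.
Set Implicit Arguments. Unset Strict Implicit. Unset Printing Implicit Defensive.
Import Order.TTheory GRing.Theory Num.Theory.
Local Open Scope ring_scope.

Definition upper_part (F : fieldType) (n : nat) (B : 'M[F]_n) : 'M[F]_n :=
  \matrix_(i < n, j < n) (if (i <= j)%N then B i j else 0).

(* Preconditioner M: same as A except the II block is replaced by its
   upper triangular part.  Blocks: L = first NL indices, I = last NI. *)
Definition precond (F : fieldType) (NL NI : nat) (A : 'M[F]_(NL + NI))
  : 'M[F]_(NL + NI) :=
  block_mx (ulsubmx A) (ursubmx A) (dlsubmx A) (upper_part (drsubmx A)).

Definition schurA (F : fieldType) (NL NI : nat) (A : 'M[F]_(NL + NI)) : 'M[F]_NI :=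
  drsubmx A - dlsubmx A *m invmx (ulsubmx A) *m ursubmx A.

Definition schurM (F : fieldType) (NL NI : nat) (A : 'M[F]_(NL + NI)) : 'M[F]_NI :=
  upper_part (drsubmx A) - dlsubmx A *m invmx (ulsubmx A) *m ursubmx A.

Definition unit_vec (F : fieldType) (n : nat) (k : 'I_n) : 'cV[F]_n :=
  delta_mx k 0.

(* Main.v *)
Require Import Defs.
From HB Require Import structures.
From mathcomp Require Import all_boot all_order all_algebra.
Import GRing.Theory.
Local Open Scope ring_scope.

Lemma char_poly_ublock (F : fieldType) n1 n2 (X : 'M[F]_n1) (Y : 'M[F]_(n1, n2)) (W : 'M[F]_n2) :
  char_poly (block_mx X Y 0 W) = char_poly X * char_poly W.
Proof.
rewrite /char_poly /char_poly_mx map_block_mx (scalar_mx_block n1 n2) map_mx0.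
by rewrite opp_block_mx add_block_mx oppr0 !add0r det_ublock.
Qed.

Lemma char_poly1 (F : fieldType) n : char_poly (1%:M : 'M[F]_n) = ('X - 1%:P) ^+ n.
Proof.
rewrite /char_poly /char_poly_mx.
have -> : map_mx (@polyC F) (1%:M : 'M[F]_n) = (1%:P)%:M.
  by apply/matrixP=> i j; rewrite !mxE; case: (i == j).
by rewrite -raddfB det_scalar.
Qed.

Theorem theorem2p1 (F : fieldType) (NL NI : nat) (A : 'M[F]_(NL + NI)) :
  ulsubmx A \in unitmx ->
  schurA A \in unitmx ->
  schurM A \in unitmx ->
  (forall k : 'I_NL,
     (invmx (precond A) *m A) *m unit_vec F (lshift NI k)
       = 1 *: unit_vec F (lshift NI k)) /\
  char_poly (invmx (precond A) *m A)
    = ('X - 1%:P) ^+ NL * char_poly (invmx (schurM A) *m schurA A).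
Proof.
move=> uP uSA uSM.
set P := ulsubmx A; set Q := ursubmx A; set R := dlsubmx A; set S := drsubmx A.
set U := upper_part S.
have [W Wdef] : {W : 'M[F]_NI | W = invmx (schurM A) *m (S - U)} by eexists.
set Z := - (invmx P *m Q *m W).
have SMdef : schurM A = U - R *m invmx P *m Q by [].
have SAdef : schurA A = S - R *m invmx P *m Q by [].
have Mfac : precond A = block_mx 1%:M 0 (R *m invmx P) 1%:M *m block_mx P Q 0 (schurM A).
  rewrite mulmx_block !mul1mx !mul0mx !addr0 mulmxKV //.
  rewrite /precond -/P -/Q -/R -/S -/U.
  by rewrite SMdef addrC subrK.
have uM : precond A \in unitmx.
  rewrite unitmxE Mfac det_mulmx det_lblock det_ublock !det1 !mul1r.
  by rewrite unitrM -!unitmxE uP uSM.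
have MB : precond A *m block_mx 1%:M Z 0 (1%:M + W) = A.
  rewrite /precond mulmx_block !mulmx1 !mulmx0 !addr0 -/P -/Q -/R -/S.
  rewrite -[RHS](submxK A) -/P -/Q -/R -/S; congr block_mx.
    rewrite /Z mulmxN !mulmxA mulmxV // mul1mx mulmxDr mulmx1.
    by rewrite addrC addrK.
  rewrite /Z mulmxN mulmxDr mulmx1 !mulmxA addrCA -mulNmx -mulmxDl (addrC (- _)) -/U -SMdef.
  by rewrite Wdef mulmxA mulmxV // mul1mx addrC subrK.
have BE : invmx (precond A) *m A = block_mx 1%:M Z 0 (1%:M + W).
  by rewrite -[X in invmx _ *m X]MB mulKmx.
split.
  move=> k; rewrite BE /unit_vec delta_mx_ushift mul_block_col.
  by rewrite !mulmx0 !addr0 mul1mx mul0mx scale1r.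
rewrite BE char_poly_ublock char_poly1; congr (_ * char_poly _).
rewrite Wdef -[1%:M](mulVmx uSM) -mulmxDr; congr (_ *m _).
rewrite SMdef SAdef addrC addrA addrNK.
by [].
Qed.
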